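(* Suppose that $X$ is a Polish space, $\langle R_{n}:n\in\mathbb{N}\rangle$ is a sequence of $F_{\sigma}$ subsets of $X\times X$, $\Gamma$ is a group of homeomorphisms of $X$, and $\mathcal{O}\subseteq X$ is a $\Gamma$-orbit such that for every $n\in\mathbb{N}$ and every open set $U\subseteq X$ intersecting $\mathcal{O}$ there are distinct $x,y\in\mathcal{O}\cap U$ with $\mathcal{O}\cap(R_{n})_{x}\cap(R_{n})_{y}=\emptyset$. Then there is a continuous injective map $\phi:2^{\omega}\to\overline{\mathcal{O}}$ such that for all $y,z\in2^{\omega}$: if $y\mathbin{\mathbb{E}_{0}}z$ then $\phi(y),\phi(z)$ lie in the same $\Gamma$-orbit, and if not $y\mathbin{\mathbb{E}_{0}}z$ then $(\phi(y),\phi(z))\notin\bigcup_{n\in\mathbb{N}}R_{n}$.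
   Context: For $R\subseteq X\times X$ and $x\in X$, $R_{x}=\{y\in X: (x,y)\in R\}$. $\mathbb{E}_{0}$ is the equivalence relation on $2^{\omega}$ given by $y\mathbin{\mathbb{E}_{0}}z$ iff there is $n$ with $y(m)=z(m)$ for all $m>n$. *)

(* Defs.v *)
From HB Require Import structures.
From mathcomp Require Import all_boot all_order all_algebra.
From mathcomp Require Import all_classical all_reals all_analysis.
From mathcomp Require Import Rstruct Rstruct_topology borel_hierarchy cantor.
Set Implicit Arguments. Unset Strict Implicit. Unset Printing Implicit Defensive.
Import Order.TTheory GRing.Theory Num.Theory.
Local Open Scope classical_set_scope.
Local Open Scope ring_scope.

Definition is_metric (X : Type) (d : X -> X -> Rdefinitions.R) : Prop :=
  [/\ forall x y, 0 <= d x y,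
      forall x y, d x y = 0 <-> x = y,
      forall x y, d x y = d y x &
      forall x y z, d x z <= d x y + d y z].

Definition metric_compatible (X : topologicalType) (d : X -> X -> Rdefinitions.R) : Prop :=
  forall U : set X, open U <->
    (forall x, U x -> exists2 e : Rdefinitions.R, 0 < e & forall y, d x y < e -> U y).

Definition metric_complete (X : topologicalType) (d : X -> X -> Rdefinitions.R) : Prop :=
  forall u : nat -> X,
    (forall e : Rdefinitions.R, 0 < e -> exists N, forall m n, (N <= m)%N -> (N <= n)%N ->
        d (u m) (u n) < e) ->
    exists l : X, u @ \oo --> l.

Definition separable_space (X : topologicalType) : Prop :=
  exists2 D : set X, countable D & dense D.

Definition polish (X : topologicalType) : Prop :=
  separable_space X /\
  exists d : X -> X -> Rdefinitions.R,
    [/\ is_metric d, metric_compatible d & metric_complete d].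

Definition homeomorphism (X : topologicalType) (g : X -> X) : Prop :=
  exists h : X -> X, [/\ cancel g h, cancel h g, continuous g & continuous h].

Definition homeo_group (X : topologicalType) (G : set (X -> X)) : Prop :=
  [/\ (forall g, G g -> homeomorphism g),
      G id,
      (forall g h, G g -> G h -> G (g \o h)) &
      (forall g, G g -> exists2 h, G h & cancel g h /\ cancel h g)].

Definition gorbit (X : Type) (G : set (X -> X)) (x : X) : set X :=
  [set y | exists2 g, G g & g x = y].

Definition rsection (X : Type) (R : set (X * X)) (x : X) : set X :=
  [set y | R (x, y)].

Definition E0 (y z : cantor_space) : Prop :=
  exists n : nat, forall m : nat, (n < m)%N -> y m = z m.

(* Main.v *)
Require Import Defs.
From HB Require Import structures.
From mathcomp Require Import all_boot all_order all_algebra.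
From mathcomp Require Import all_classical all_reals all_analysis borel_hierarchy cantor.
From mathcomp Require Import Rstruct Rstruct_topology.
From mathcomp Require Import lra.
From Stdlib Require Import ClassicalEpsilon.
Import Order.TTheory GRing.Theory Num.Theory.
Local Open Scope classical_set_scope.
Local Open Scope ring_scope.
Notation RR := Rdefinitions.R.

Section Main.
Variable X : topologicalType.
Variable d : X -> X -> RR.
Hypothesis dm : is_metric d.
Hypothesis dc : metric_compatible d.

Lemma d_ge0 x y : 0 <= d x y. Proof. by case: dm. Qed.
Lemma d_eq0 x y : d x y = 0 <-> x = y. Proof. by case: dm. Qed.
Lemma d_sym x y : d x y = d y x. Proof. by case: dm. Qed.
Lemma d_tri x y z : d x z <= d x y + d y z. Proof. by case: dm. Qed.
Lemma d_xx x : d x x = 0. Proof. exact/d_eq0. Qed.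

Lemma ball_open a e : open [set z | d a z < e].
Proof.
apply/(dc _).2 => z hz; exists (e - d a z); first by rewrite subr_gt0.
move=> y hy; have := d_tri a z y; rewrite /=; lra.
Qed.

Lemma open_ball {U : set X} {a : X} : open U -> U a -> exists2 e, 0 < e & forall z, d a z < e -> U z.
Proof. by move=> oU Ua; apply: (dc U).1. Qed.

Lemma nbhs_ball {U : set X} {a : X} : nbhs a U -> exists2 e, 0 < e & forall z, d a z < e -> U z.
Proof.
rewrite nbhsE => -[B [oB Ba] BU].
have [e e0 he] := open_ball oB Ba; exists e => // z /he; exact: BU.
Qed.

Lemma ball_nbhs a e : 0 < e -> nbhs a [set z | d a z < e].
Proof.
move=> e0; rewrite nbhsE; exists [set z | d a z < e] => //; split.
  exact: ball_open.
by rewrite /= d_xx.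
Qed.

Lemma cvg_d (u : nat -> X) l : u @ \oo --> l ->
  forall e : RR, 0 < e -> exists N, forall n, (N <= n)%N -> d l (u n) < e.
Proof.
move=> hu e e0; have [N _ HN] := hu _ (@ball_nbhs l e e0).
by exists N => n hn; apply: HN.
Qed.

Lemma le_of_eps (x y : RR) : (forall e, 0 < e -> x <= y + e) -> x <= y.
Proof.
move=> h; rewrite leNgt; apply/negP => hxy.
have := h ((x - y) / 2); lra.
Qed.

Lemma d_uniq (u : nat -> X) (l1 l2 : X) : u @ \oo --> l1 -> u @ \oo --> l2 -> l1 = l2.
Proof.
move=> h1 h2; apply/d_eq0; apply/le_anti; rewrite d_ge0 andbT.
apply: le_of_eps => e e0.
have [N1 H1] := @cvg_d _ _ h1 (e/2) ltac:(lra).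
have [N2 H2] := @cvg_d _ _ h2 (e/2) ltac:(lra).
have := H1 (maxn N1 N2) (leq_maxl _ _); have := H2 (maxn N1 N2) (leq_maxr _ _).
have := d_tri l1 (u (maxn N1 N2)) l2; rewrite (d_sym l2); lra.
Qed.

Lemma open_pre_ball (h : X -> X) a e : continuous h -> open [set p | d a (h p) < e].
Proof. by move=> /continuousP hc; apply: (hc [set z | d a z < e]); apply: ball_open. Qed.

Definition small (P : RR -> Prop) := exists2 r, 0 < r & forall r', 0 < r' -> r' <= r -> P r'.

Lemma small_and {P Q : RR -> Prop} : small P -> small Q -> small (fun r => P r /\ Q r).
Proof.
move=> [r1 r10 h1] [r2 r20 h2]; exists (Num.min r1 r2).
  by rewrite lt_min r10 r20.
by move=> r' r'0; rewrite le_min => /andP[a b]; split; [apply: h1|apply: h2].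
Qed.

Lemma small_T : small (fun _ => True).
Proof. by exists 1. Qed.

Lemma small_list {A} (L : list A) (P : A -> RR -> Prop) :
  (forall a, List.In a L -> small (P a)) -> small (fun r => forall a, List.In a L -> P a r).
Proof.
elim: L => [|a L IH] hL; first by exists 1 => // ? ? ? ? [].
have [r r0 hr] := small_and (hL a (or_introl erefl)) (IH (fun b hb => hL b (or_intror hb))).
exists r => // r' r'0 r'r b [<-|hb]; first by case: (hr r' r'0 r'r).
by case: (hr r' r'0 r'r) => _; apply.
Qed.

Lemma small_le m (P : nat -> RR -> Prop) :
  (forall n, (n <= m)%N -> small (P n)) -> small (fun r => forall n, (n <= m)%N -> P n r).
Proof.
elim: m => [|m IH] hm.
  have [r r0 hr] := hm 0%N (leqnn _); exists r => // r' r'0 r'r n.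
  by rewrite leqn0 => /eqP ->; apply: hr.
have [r r0 hr] := small_and (hm m.+1 (leqnn _)) (IH (fun n hn => hm n (leqW hn))).
exists r => // r' r'0 r'r n; rewrite leq_eqVlt => /orP[/eqP ->|hn].
  by case: (hr r' r'0 r'r).
by case: (hr r' r'0 r'r) => _; apply.
Qed.

Lemma margin {S : set (X * X)} {a b : X} : closed S -> ~ S (a, b) ->
  small (fun r => forall a' b', d a a' < r -> d b b' < r -> ~ S (a', b')).
Proof.
move=> cS nS; rewrite -openC in cS.
have : nbhs (a, b) (~` S) by rewrite nbhsE; exists (~` S) => //; split.
move=> [[A B] /= [nA nB] sAB].
have [r1 r10 h1] := nbhs_ball nA; have [r2 r20 h2] := nbhs_ball nB.
exists (Num.min r1 r2); first by rewrite lt_min r10 r20.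
move=> r' r'0; rewrite le_min => /andP[l1 l2] a' b' da db.
apply: (sAB (a', b')); split; [apply: h1|apply: h2]; lra.
Qed.

Lemma open_notC1 (S : set (X * X)) w : closed S -> open [set a | ~ S (a, w)].
Proof.
move=> cS; apply/(dc _).2 => a /= ha.
have [r r0 hr] := margin cS ha; exists r => // z hz.
apply: (hr r r0 (lexx _)) => //; by rewrite d_xx.
Qed.

Lemma open_notC2 (S : set (X * X)) w : closed S -> open [set b | ~ S (w, b)].
Proof.
move=> cS; apply/(dc _).2 => a /= ha.
have [r r0 hr] := margin cS ha; exists r => // z hz.
apply: (hr r r0 (lexx _)) => //; by rewrite d_xx.
Qed.

Variable G : set (X -> X).
Hypothesis HG : homeo_group G.
Variable x0 : X.
Variable Rel : nat -> set (X * X).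
Variable C : nat -> nat -> set (X * X).
Hypothesis Cclosed : forall n j, closed (C n j).
Hypothesis CR : forall n j, C n j `<=` Rel n.
Hypothesis hyp : forall (n : nat) (U : set X), open U -> gorbit G x0 `&` U !=set0 ->
     exists x y : X, [/\ x <> y, (gorbit G x0 `&` U) x, (gorbit G x0 `&` U) y &
       gorbit G x0 `&` rsection (Rel n) x `&` rsection (Rel n) y = set0].

Definition O := gorbit G x0.

Lemma G_cont {g} : G g -> continuous g.
Proof. by case: HG => hh _ _ _ /hh [h [_ _ ? _]]. Qed.
Lemma G_id : G id. Proof. by case: HG. Qed.
Lemma G_comp {g h} : G g -> G h -> G (g \o h). Proof. by case: HG => _ _ hc _; apply: hc. Qed.
Lemma G_inv {g} : G g -> exists2 h, G h & cancel g h /\ cancel h g.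
Proof. by case: HG => _ _ _; apply. Qed.
Lemma G_inj {g} : G g -> injective g.
Proof. by move=> /G_inv [h _ [gh _]]; apply: can_inj gh. Qed.
Lemma O_x0 : O x0. Proof. by exists id => //; exact: G_id. Qed.
Lemma O_G {g a} : G g -> O a -> O (g a).
Proof. by move=> Gg [f Gf <-]; exists (g \o f) => //; exact: G_comp. Qed.

Definition shrinkable (P : X -> Prop) := forall U, open U -> O `&` U !=set0 ->
  exists V, [/\ open V, V `<=` U, O `&` V !=set0 & forall p, V p -> P p].

Lemma shrink_and {P Q : X -> Prop} : shrinkable P -> shrinkable Q -> shrinkable (fun p => P p /\ Q p).
Proof.
move=> hP hQ U oU nU; have [V [oV VU nV PV]] := hP U oU nU.
have [W [oW WV nW QW]] := hQ V oV nV.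
exists W; split => //; first by move=> p /WV /VU.
move=> p Wp; split; [exact/PV/WV|exact/QW].
Qed.

Lemma shrink_list {A} (L : list A) (P : A -> X -> Prop) :
  (forall a, List.In a L -> shrinkable (P a)) -> shrinkable (fun p => forall a, List.In a L -> P a p).
Proof.
elim: L => [|a L IH] hL.
  by move=> U oU nU; exists U; split => // ? ? ? [].
move=> U oU nU.
have [V [oV VU nV PV]] := shrink_and (hL a (or_introl erefl)) (IH (fun b hb => hL b (or_intror hb))) U oU nU.
exists V; split => // p Vp b [<-|hb]; first by case: (PV p Vp).
by case: (PV p Vp) => _; apply.
Qed.

Lemma shrink_le m (P : nat -> X -> Prop) :
  (forall n, (n <= m)%N -> shrinkable (P n)) -> shrinkable (fun p => forall n, (n <= m)%N -> P n p).
Proof.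
elim: m => [|m IH] hm U oU nU.
  have [V [oV VU nV PV]] := hm 0%N (leqnn _) U oU nU; exists V; split => // p Vp n.
  by rewrite leqn0 => /eqP ->; apply: PV.
have [V [oV VU nV PV]] := shrink_and (hm m.+1 (leqnn _)) (IH (fun n hn => hm n (leqW hn))) U oU nU.
exists V; split => // p Vp n; rewrite leq_eqVlt => /orP[/eqP ->|hn].
  by case: (PV p Vp).
by case: (PV p Vp) => _; apply.
Qed.

Lemma shrink_basic h w n j : G h -> O w -> shrinkable (fun p => ~ C n j (h p, w)).
Proof.
move=> Gh Ow U oU [p [Op Up]].
have [k Gk [hk kh]] := G_inv Gh.
have oV : open (k @^-1` U) by move: (G_cont Gk) => /continuousP; apply.
have nV : O `&` (k @^-1` U) !=set0 by exists (h p); split; [exact: O_G|rewrite /= hk].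
have [x' [y' [nxy [Ox' Ux'] [Oy' Uy'] hsec]]] := hyp n (k @^-1` U) oV nV.
have : ~ (Rel n (x', w) /\ Rel n (y', w)).
  move=> [r1 r2]; have : (O `&` rsection (Rel n) x' `&` rsection (Rel n) y') w by [].
  by rewrite hsec.
move=> nboth.
have [a [Oa Ua na]] : exists a, [/\ O a, U (k a) & ~ C n j (a, w)].
  case: (pselect (Rel n (x', w))) => hx.
    exists y'; split => // /CR; tauto.
  by exists x'; split => // /CR.
exists (U `&` [set q | ~ C n j (h q, w)]); split.
- apply: openI => //; move: (G_cont Gh) => /continuousP hc.
  exact: (hc [set a | ~ C n j (a, w)] (@open_notC1 (C n j) w (Cclosed n j))).
- by move=> ? [].
- exists (k a); split; first exact: O_G Gk Oa.
  by split => //=; rewrite kh.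
- by move=> q [].
Qed.

Lemma open_list {A} (L : list A) (P : A -> X -> Prop) :
  (forall a, List.In a L -> open (P a)) -> open (fun p => forall a, List.In a L -> P a p).
Proof.
elim: L => [|a L IH] hL.
  have -> : (fun p : X => forall a, List.In a [::] -> P a p) = setT.
    by apply/funext => p; apply/propext; split => // _ ? [].
  exact: openT.
have -> : (fun p => forall b, List.In b (a :: L) -> P b p) = P a `&` (fun p => forall b, List.In b L -> P b p).
  apply/funext => p; apply/propext; split.
    by move=> h; split; [apply: h; left|move=> b hb; apply: h; right].
  by move=> [h1 h2] b [<-|hb] //; apply: h2.
apply: openI; first exact: hL (or_introl erefl).
exact: IH (fun b hb => hL b (or_intror hb)).
Qed.

Lemma open_le m (P : nat -> X -> Prop) :
  (forall n, (n <= m)%N -> open (P n)) -> open (fun p => forall n, (n <= m)%N -> P n p).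
Proof.
elim: m => [|m IH] hm.
  have -> : (fun p => forall n, (n <= 0)%N -> P n p) = P 0%N.
    apply/funext => p; apply/propext; split; first by apply.
    by move=> h n; rewrite leqn0 => /eqP ->.
  exact: hm.
have -> : (fun p => forall n, (n <= m.+1)%N -> P n p) = P m.+1 `&` (fun p => forall n, (n <= m)%N -> P n p).
  apply/funext => p; apply/propext; split.
    by move=> h; split; [apply: h|move=> n hn; apply: h; apply: leqW].
  by move=> [h1 h2] n; rewrite leq_eqVlt => /orP[/eqP ->|hn] //; apply: h2.
apply: openI; first exact: hm.
exact: IH (fun n hn => hm n (leqW hn)).
Qed.

Definition Spec (m : nat) (H : list (X -> X)) (eps : RR) (t : (X -> X) * (X -> X) * RR) : Prop :=
 [/\ G t.1.1 /\ G t.1.2, 0 < t.2 /\ t.2 <= eps / 2 /\ t.2 * m.+1%:R <= 1,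
   forall h, List.In h H -> d (h x0) (h (t.1.1 x0)) < eps /\ d (h x0) (h (t.1.2 x0)) < eps,
   forall h, List.In h H -> 6 * t.2 < d (h (t.1.1 x0)) (h (t.1.2 x0)) &
   forall h h', List.In h H -> List.In h' H -> forall n, (n <= m)%N -> forall j, (j <= m)%N ->
      forall a b, d (h (t.1.2 x0)) a < 3 * t.2 -> d (h' (t.1.1 x0)) b < 3 * t.2 ->
        ~ C n j (a, b) /\ ~ C n j (b, a)].

Lemma small_leD (D : RR) : 0 < D -> small (fun r => r <= D).
Proof. by move=> D0; exists D. Qed.

Lemma stage m H (eps : RR) : (forall h, List.In h H -> G h) -> 0 < eps -> exists t, Spec m H eps t.
Proof.
move=> HG' e0.
pose U0 := (fun p => forall h, List.In h H -> [set q | d (h x0) (h q) < eps] p).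
have oU0 : open U0.
  by apply: open_list => h hh; exact: open_pre_ball (G_cont (HG' h hh)).
have U0x : U0 x0 by move=> h _ /=; rewrite d_xx.
pose P1 := fun p => forall h, List.In h H -> forall h', List.In h' H ->
   forall n, (n <= m)%N -> forall j, (j <= m)%N -> ~ C n j (h p, h' x0).
have sh1 : shrinkable P1.
  apply: shrink_list => h hh; apply: shrink_list => h' hh'.
  apply: shrink_le => n hn; apply: shrink_le => j hj.
  apply: shrink_basic; [exact: HG' | exact: O_G (HG' h' hh') O_x0].
have [U1 [oU1 U1U0 nU1 P1U1]] : exists V, [/\ open V, V `<=` U0, O `&` V !=set0 & forall p, V p -> P1 p].
  by apply: sh1 => //; exists x0; split => //; exact: O_x0.
have [x' [y' [nxy [Ox' Ux'] [Oy' Uy'] _]]] := hyp 0 U1 oU1 nU1.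
have [p1 [Op1 Up1 np1]] : exists p1, [/\ O p1, U1 p1 & p1 <> x0].
  case: (pselect (x' = x0)) => hx; [exists y' | exists x']; split => //.
  by move=> hy; apply: nxy; rewrite hx hy.
pose W0 := U0 `&` (fun q => forall h, List.In h H -> forall h', List.In h' H ->
   forall n, (n <= m)%N -> forall j, (j <= m)%N -> ~ C n j (h p1, h' q)).
have oW0 : open W0.
  apply: openI => //.
  apply: open_list => h hh; apply: open_list => h' hh'.
  apply: open_le => n hn; apply: open_le => j hj.
  move: (G_cont (HG' h' hh')) => /continuousP hc.
  exact: (hc [set b | ~ C n j (h p1, b)] (@open_notC2 (C n j) (h p1) (Cclosed n j))).
have W0x : W0 x0 by split => //; apply: P1U1.
pose P2 := fun q => forall h, List.In h H -> forall h', List.In h' H ->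
   forall n, (n <= m)%N -> forall j, (j <= m)%N -> ~ C n j (h q, h' p1).
have sh2 : shrinkable P2.
  apply: shrink_list => h hh; apply: shrink_list => h' hh'.
  apply: shrink_le => n hn; apply: shrink_le => j hj.
  apply: shrink_basic; [exact: HG' | exact: O_G (HG' h' hh') Op1].
have [W1 [oW1 W1W0 nW1 P2W1]] : exists V, [/\ open V, V `<=` W0, O `&` V !=set0 & forall p, V p -> P2 p].
  by apply: sh2 => //; exists x0; split => //; exact: O_x0.
have [x'' [y'' [nxy' [Ox'' Ux''] [Oy'' Uy''] _]]] := hyp 0 W1 oW1 nW1.
have [p0 [Op0 Wp0 np0]] : exists p0, [/\ O p0, W1 p0 & p0 <> p1].
  case: (pselect (x'' = p1)) => hx; [exists y'' | exists x'']; split => //.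
  by move=> hy; apply: nxy'; rewrite hx hy.
have [g0 Gg0 g0x] := Op0.
have [g1 Gg1 g1x] := Op1.
have W0p0 := W1W0 _ Wp0.
have P2p0 := P2W1 _ Wp0.
pose Q := fun r : RR =>
  (forall h, List.In h H -> forall h', List.In h' H ->
   forall n, (n <= m)%N -> forall j, (j <= m)%N ->
   forall a b, d (h p1) a < r -> d (h' p0) b < r -> ~ C n j (a, b)) /\
  ((forall h, List.In h H -> forall h', List.In h' H ->
   forall n, (n <= m)%N -> forall j, (j <= m)%N ->
   forall a b, d (h' p0) a < r -> d (h p1) b < r -> ~ C n j (a, b)) /\
  (forall h, List.In h H -> r <= d (h p0) (h p1))).
have smQ : small Q.
  apply: small_and.
    apply: small_list => h hh; apply: small_list => h' hh'.
    apply: small_le => n hn; apply: small_le => j hj.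
    by apply: margin => //; apply: W0p0.2.
  apply: small_and.
    apply: small_list => h hh; apply: small_list => h' hh'.
    apply: small_le => n hn; apply: small_le => j hj.
    by apply: margin => //; apply: P2p0.
  apply: small_list => h hh; apply: small_leD.
  rewrite lt0r d_ge0 andbT; apply/eqP => /d_eq0 /(G_inj (HG' h hh)); exact: np0.
have [r r0 hr] := smQ.
have [Q1 [Q2 Q3]] := hr r r0 (lexx r).
pose M : RR := m.+1%:R.
have M0 : 0 < M by rewrite /M ltr0n.
have hMi : M * M^-1 = 1 by rewrite mulfV // gt_eqF.
have Mi0 : 0 < M^-1 by rewrite invr_gt0.
pose e := Num.min (eps / 2) (Num.min (r / 7) M^-1).
have e1 : e <= eps / 2 by rewrite /e ge_min lexx.
have e2 : e <= r / 7 by rewrite /e ge_min ge_min lexx orbT.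
have e3 : e <= M^-1 by rewrite /e ge_min ge_min lexx !orbT.
have e0' : 0 < e by rewrite /e !lt_min; apply/and3P; split => //; lra.
exists (g0, g1, e); split => /=.
- by [].
- split => //; split => //; rewrite -/M.
  have : e * M <= M^-1 * M by rewrite ler_wpM2r // ltW.
  by rewrite mulVf // gt_eqF.
- move=> h hh; rewrite g0x g1x; split; [exact: W0p0.1 | exact: U1U0 _ Up1 h hh].
- by move=> h hh; rewrite g0x g1x; have := Q3 h hh; lra.
- move=> h h' hh hh' n hn j hj a b; rewrite g0x g1x => da db; split.
    apply: (Q1 h hh h' hh' n hn j hj) => //; lra.
  apply: (Q2 h hh h' hh' n hn j hj) => //; lra.
Qed.

Definition step (st : nat * list (X -> X) * RR) : (X -> X) * (X -> X) * RR :=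
  epsilon (inhabits (id, id, 1%R)) (Spec st.1.1 st.1.2 st.2).
Definition next (st : nat * list (X -> X) * RR) : nat * list (X -> X) * RR :=
  ((st.1.1).+1, List.flat_map (fun h => [:: h \o (step st).1.1; h \o (step st).1.2]) st.1.2, (step st).2).
Fixpoint state n : nat * list (X -> X) * RR :=
  if n is n'.+1 then next (state n') else (0%N, [:: id], 1%R).

Lemma state_inv n : [/\ (state n).1.1 = n, (forall h, List.In h (state n).1.2 -> G h) & 0 < (state n).2].
Proof.
elim: n => [|n [IH1 IH2 IH3]].
  by split => //= h [<-|[]]; exact: G_id.
have sp := epsilon_spec (inhabits (id, id, 1%R)) _ (@stage (state n).1.1 _ _ IH2 IH3).
case: sp => [[Gg0 Gg1] [e0 _] _ _ _].
split => //=; first by rewrite IH1.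
move=> h /List.in_flat_map [h' [hh' /= [<-|[<-|[]]]]]; apply: G_comp => //; exact: IH2.
Qed.

Lemma spec_n n : Spec n (state n).1.2 (state n).2 (step (state n)).
Proof.
have [IH1 IH2 IH3] := state_inv n.
have := epsilon_spec (inhabits (id, id, 1%R)) _ (@stage (state n).1.1 _ _ IH2 IH3).
by rewrite /step IH1.
Qed.

Definition gam n (b : bool) := if b then (step (state n)).1.2 else (step (state n)).1.1.
Definition eps n := (state n).2.
Fixpoint hpre (y : nat -> bool) n : X -> X :=
  if n is n'.+1 then hpre y n' \o gam n' (y n') else id.
Definition a y n := hpre y n x0.

Lemma hpre_in y n : List.In (hpre y n) (state n).1.2.
Proof.
elim: n => [|n IH] /=; first by left.
apply/List.in_flat_map; exists (hpre y n); split => //=.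
by rewrite /gam; case: (y n); [right; left|left].
Qed.

Lemma hpre_G y n : G (hpre y n).
Proof. by have [_ hG _] := state_inv n; apply: hG; exact: hpre_in. Qed.

Lemma eps_pos n : 0 < eps n.
Proof. by have [] := state_inv n. Qed.

Lemma eps_half n : eps n.+1 <= eps n / 2.
Proof. by have [_ [_ []]] := spec_n n. Qed.

Lemma eps_inv n : eps n.+1 * n.+1%:R <= 1.
Proof. by have [_ [_ []]] := spec_n n. Qed.

Lemma a_step y n : d (a y n) (a y n.+1) < eps n.
Proof.
have [_ _ h3 _ _] := spec_n n.
have [u v] := h3 _ (hpre_in y n).
by rewrite /a /= /gam; case: (y n).
Qed.

Lemma a_cauchy y m k : d (a y m) (a y (m + k)) <= 2 * eps m - 2 * eps (m + k).
Proof.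
elim: k => [|k IH]; first by rewrite addn0 d_xx; lra.
have := d_tri (a y m) (a y (m + k)) (a y (m + k.+1)).
have := a_step y (m + k); have := eps_half (m + k); rewrite addnS; lra.
Qed.

Lemma a_close y {m M : nat} : (m <= M)%N -> d (a y m) (a y M) <= 2 * eps m.
Proof.
move=> hm; have := a_cauchy y m (M - m); rewrite subnKC //.
have := eps_pos M; lra.
Qed.

Lemma eps_small (e : RR) : 0 < e -> exists N, forall n, (N <= n)%N -> eps n < e.
Proof.
move=> e0; have ei : 0 < e^-1 by rewrite invr_gt0.
have := @archi_boundP _ (e^-1) (ltW ei).
set K := Num.Def.archi_bound _ => hK.
exists K.+1 => -[|n] // hn.
have hnK : (K <= n.+1)%N by apply: ltnW.
have hKn : (K%:R : RR) <= n.+1%:R by rewrite ler_nat.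
have hee : e * e^-1 = 1 by rewrite mulfV // gt_eqF.
have := eps_inv n; have := eps_pos n.+1.
have n0 : (0 : RR) < n.+1%:R by rewrite ltr0n.
set M := (n.+1%:R : RR) in hKn n0 *.
have h1 : 1 < e * M by nra.
nra.
Qed.

Hypothesis dcomp : metric_complete d.

Lemma limit_exists y : exists l : X, a y @ \oo --> l.
Proof.
apply: dcomp => e e0; have [N hN] := eps_small (e / 2) ltac:(lra).
exists N => m n hm hn; case: (leqP m n) => hmn.
  have := a_close y hmn; have := hN m hm; lra.
rewrite d_sym; have := a_close y (ltnW hmn); have := hN n hn; lra.
Qed.

Lemma a_lim {y} {l : X} m : a y @ \oo --> l -> d (a y m) l <= 2 * eps m.
Proof.
move=> hl; apply: le_of_eps => e e0.
have [N hN] := @cvg_d _ _ hl e e0.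
have h1 := hN (maxn m N) (leq_maxr _ _).
have h2 := a_close y (leq_maxl m N).
have := d_tri (a y m) (a y (maxn m N)) l; rewrite (d_sym (a y (maxn m N)) l); lra.
Qed.

Lemma hpre_eq {y z : nat -> bool} {m} : (forall j, (j < m)%N -> z j = y j) -> hpre z m = hpre y m.
Proof.
elim: m => [//|m IH] hj /=.
by rewrite IH ?hj // => j hjm; apply: hj; apply: ltnW.
Qed.

Lemma cyl_nbhs (y : cantor_space) m : nbhs y [set z : cantor_space | forall j, (j < m)%N -> z j = y j].
Proof.
elim: m => [|m IH].
  by apply: filterS filterT => z _ j; rewrite ltn0.
have hp : nbhs y [set z : cantor_space | z m = y m].
  exact: (@proj_continuous nat (fun _ => bool) m y _ (discrete_set1 (y m))).
apply: filterS (filterI IH hp) => z [h1 h2] j; rewrite ltnS leq_eqVlt => /orP[/eqP ->|hj] //.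
exact: h1.
Qed.

Section Phi.
Variable phi : cantor_space -> X.
Hypothesis hphi : forall y, a y @ \oo --> phi y.

Lemma phi_cont : continuous phi.
Proof.
move=> y B /nbhs_ball [e e0 he].
have [m hm] := eps_small (e / 4) ltac:(lra).
have hm' := hm m (leqnn m).
apply: filterS (cyl_nbhs y m) => z hz; apply: he.
have h1 := a_lim m (hphi y); have h2 := a_lim m (hphi z).
have eq : a z m = a y m by rewrite /a (hpre_eq hz).
rewrite eq in h2.
have := d_tri (phi y) (a y m) (phi z); rewrite (d_sym (phi y) (a y m)); lra.
Qed.

Lemma phi_inj : injective phi.
Proof.
move=> y z eyz; apply/funext => n; apply/eqP; apply/negPn/negP => hn.
have ex : exists n, y n != z n by exists n.
case: (ex_minnP ex) => k hk hmin.
have hj : forall j, (j < k)%N -> z j = y j.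
  move=> j hjk; apply/eqP; rewrite eq_sym; apply/negPn/negP => hne.
  by have := hmin j hne; rewrite leqNgt hjk.
have [_ _ _ h4 _] := spec_n k.
have key : 6 * eps k.+1 < d (a y k.+1) (a z k.+1).
  have := h4 _ (hpre_in y k).
  rewrite /a /= (hpre_eq hj) /gam /eps /=.
  by case: (y k) (z k) hk => [] [] // _; rewrite d_sym.
have h1 := a_lim k.+1 (hphi y); have h2 := a_lim k.+1 (hphi z).
rewrite eyz in h1.
have := eps_pos k.+1; have := d_tri (a y k.+1) (phi z) (a z k.+1); rewrite (d_sym (phi z) (a z k.+1)); lra.
Qed.

Lemma phi_cl y : closure O (phi y).
Proof.
move=> B /nbhs_ball [e e0 he].
have [m hm] := eps_small (e / 4) ltac:(lra).
have hm' := hm m (leqnn m).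
exists (a y m); split; first exact: O_G (hpre_G y m) O_x0.
apply: he; have := a_lim m (hphi y); rewrite d_sym; lra.
Qed.

Lemma phi_E0 y z : E0 y z -> exists2 g, G g & g (phi y) = phi z.
Proof.
move=> [n hn]; set k := n.+1.
have tail : forall M, exists T, hpre y (k + M) = hpre y k \o T /\ hpre z (k + M) = hpre z k \o T.
  elim => [|M [T [T1 T2]]]; first by exists id; rewrite addn0.
  have yz : y (k + M) = z (k + M) by apply: hn; exact: (leq_addr M k).
  exists (T \o gam (k + M) (y (k + M))); rewrite addnS; split.
    by rewrite -[LHS]/(hpre y (k + M) \o gam (k + M) (y (k + M))) T1.
  by rewrite -[LHS]/(hpre z (k + M) \o gam (k + M) (z (k + M))) T2 yz.
have [gy Ggy [c1 c2]] := G_inv (hpre_G y k).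
have Gg : G (hpre z k \o gy) by apply: G_comp => //; exact: hpre_G.
exists (hpre z k \o gy) => //.
have hc : (hpre z k \o gy \o a y) @ \oo --> (hpre z k \o gy) (phi y).
  exact: (continuous_cvg _ (G_cont Gg (phi y)) (hphi y)).
apply/d_eq0; apply/le_anti; rewrite d_ge0 andbT.
apply: le_of_eps => e e0.
have [N1 H1] := @cvg_d _ _ hc (e / 2) ltac:(lra).
have [N2 H2] := @cvg_d _ _ (hphi z) (e / 2) ltac:(lra).
set M := maxn (maxn N1 N2) k.
have hM1 : (N1 <= M)%N by rewrite /M leq_max leq_max leqnn.
have hM2 : (N2 <= M)%N by rewrite /M leq_max leq_max leqnn orbT.
have hMk : (k <= M)%N by rewrite /M leq_max leqnn orbT.
have eqa : (hpre z k \o gy \o a y) M = a z M.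
  have [T [T1 T2]] := tail (M - k)%N.
  change ((hpre z k \o gy) (hpre y M x0) = hpre z M x0).
  by rewrite -(subnKC hMk) T1 T2 /= c1.
have := H1 M hM1; have := H2 M hM2; rewrite eqa.
have := d_tri ((hpre z k \o gy) (phi y)) (a z M) (phi z); rewrite (d_sym (a z M)); lra.
Qed.

Hypothesis RC : forall n, Rel n `<=` \bigcup_j C n j.

Lemma phi_nE0 y z : ~ E0 y z -> ~ (\bigcup_n Rel n) (phi y, phi z).
Proof.
move=> nE [n _ hR]; have [j _ hC] := RC n (phi y, phi z) hR.
have [m [hm hym]] : exists m, (maxn n j < m)%N /\ y m != z m.
  apply: contrapT => hno; apply: nE; exists (maxn n j) => m hm.
  case: (boolP (y m == z m)) => [/eqP //|hne]; exfalso; apply: hno; by exists m.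
have hn : (n <= m)%N by apply: leq_trans (leq_maxl n j) (ltnW hm).
have hjm : (j <= m)%N by apply: leq_trans (leq_maxr n j) (ltnW hm).
have [_ [e0 _] _ _ h5] := spec_n m.
have h1 := a_lim m.+1 (hphi y); have h2 := a_lim m.+1 (hphi z).
move: h1 h2; rewrite /a /= /gam /eps /=.
move: hym hC; case: (y m); case: (z m) => //= _ hC h1 h2.
  have := h5 _ _ (hpre_in y m) (hpre_in z m) n hn j hjm (phi y) (phi z).
  by case=> //; lra.
have := h5 _ _ (hpre_in z m) (hpre_in y m) n hn j hjm (phi z) (phi y).
by case=> //; lra.
Qed.

End Phi.

Lemma final (RC : forall n, Rel n `<=` \bigcup_j C n j) :
  exists phi : cantor_space -> X,
    [/\ continuous phi,
        injective phi,
        (forall y, closure (gorbit G x0) (phi y)),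
        (forall y z, E0 y z -> exists2 g, G g & g (phi y) = phi z) &
        (forall y z, ~ E0 y z -> ~ (\bigcup_n Rel n) (phi y, phi z))].
Proof.
have [phi hphi] := boolp.choice limit_exists.
exists phi; split.
- exact: phi_cont hphi.
- exact: phi_inj hphi.
- exact: phi_cl hphi.
- exact: phi_E0 hphi.
- exact: phi_nE0 hphi RC.
Qed.

End Main.

Theorem theorem2p2 (X : topologicalType) (R : nat -> set (X * X))
  (G : set (X -> X)) (O : set X) :
  polish X ->
  (forall n, Fsigma (R n)) ->
  homeo_group G ->
  (exists x0 : X, O = gorbit G x0) ->
  (forall (n : nat) (U : set X), open U -> O `&` U !=set0 ->
     exists x y : X, [/\ x <> y, (O `&` U) x, (O `&` U) y &
       O `&` rsection (R n) x `&` rsection (R n) y = set0]) ->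
  exists phi : cantor_space -> X,
    [/\ continuous phi,
        injective phi,
        (forall y, closure O (phi y)),
        (forall y z, E0 y z -> exists2 g, G g & g (phi y) = phi z) &
        (forall y z, ~ E0 y z -> ~ (\bigcup_n R n) (phi y, phi z))].
Proof.
move=> [_ [d [dm dc dcomp]]] hF HG [x0 ->] hyp.
have hF' : forall n, exists F : nat -> set (X * X), (forall i, closed (F i)) /\ R n = \bigcup_i F i.
  by move=> n; have [F h1 h2] := hF n; exists F.
have [C hC] := boolp.choice hF'.
have Ccl : forall n j, closed (C n j) by move=> n j; exact: (hC n).1.
have CR : forall n j, C n j `<=` R n by move=> n j p hp; rewrite (hC n).2; exists j.
have RC : forall n, R n `<=` \bigcup_j C n j by move=> n; rewrite (hC n).2.
exact: (@final X d dm dc G HG x0 R C Ccl CR hyp dcomp RC).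
Qed.
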